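(* If a semigroup $X$ is $\mathsf{T_{z}S}$-closed, then for every infinite subset $A\subseteq Z(X)$ the set $AA=\{xy:x,y\in A\}$ is not a singleton.
   Context: $\mathsf{T_{z}S}$ is the class of Hausdorff zero-dimensional topological semigroups. A semigroup $X$ is $\mathsf{T_{z}S}$-closed if for every isomorphic topological embedding of $X$ (discrete topology) into some $Y\in\mathsf{T_{z}S}$ the image is closed in $Y$. $Z(X)$ is the center of $X$. *)

(* Defs.v *)
From HB Require Import structures.
From mathcomp Require Import all_boot all_order all_algebra.
From mathcomp Require Import all_classical all_reals all_analysis.
Set Implicit Arguments. Unset Strict Implicit. Unset Printing Implicit Defensive.
Local Open Scope classical_set_scope.

Definition associative_op (S : Type) (m : S -> S -> S) :=
  forall x y z, m x (m y z) = m (m x y) z.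

Definition zero_dim (Y : topologicalType) :=
  forall (U : set Y) (y : Y), open U -> U y ->
    exists V : set Y, [/\ clopen V, V y & V `<=` U].

Definition TzS (Y : topologicalType) (mY : Y -> Y -> Y) :=
  [/\ associative_op mY,
      continuous (fun p : Y * Y => mY p.1 p.2),
      hausdorff_space Y & zero_dim Y].

(* h : X -> Y is an isomorphic topological embedding of the discrete
   semigroup X into Y: an injective homomorphism that is a homeomorphism
   of X (discrete) onto its image (with the subspace topology), i.e. the
   image is a discrete subspace of Y. *)
Definition discrete_semigroup_embedding (X : Type) (mX : X -> X -> X)
  (Y : topologicalType) (mY : Y -> Y -> Y) (h : X -> Y) :=
  [/\ injective h,
      (forall x y, h (mX x y) = mY (h x) (h y)) &
      (forall x, exists U : set Y, open U /\ U `&` range h = [set h x])].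

Definition TzS_closed (X : Type) (mX : X -> X -> X) :=
  forall (Y : topologicalType) (mY : Y -> Y -> Y) (h : X -> Y),
    TzS mY -> discrete_semigroup_embedding mX mY h -> closed (range h).

Definition sg_center (X : Type) (mX : X -> X -> X) : set X :=
  [set z | forall x, mX z x = mX x z].

Definition setmul (X : Type) (mX : X -> X -> X) (A : set X) : set X :=
  [set z | exists x y, [/\ A x, A y & z = mX x y]].

(* Main.v *)
Require Import Defs.
From HB Require Import structures.
From mathcomp Require Import all_boot all_order all_algebra.
From mathcomp Require Import all_classical all_reals all_analysis.
Local Open Scope classical_set_scope.

Definition mo {X : Type} (mX : X -> X -> X) (a : X) (x : option X) : X :=
  if x is Some x then mX a x else a.
Definition pr {X : Type} (z : X) : set (set X) := [set B | B z].
Definition xi {X : Type} (mX : X -> X -> X) (U : set (set X)) (x : option X) : set (set X) :=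
  [set B | U [set a | B (mo mX a x)]].
Definition den {X : Type} (mX : X -> X -> X) (U : set (set X)) (k : X + option X) :=
  match k with inl z => pr z | inr x => xi mX U x end.
Definition isUF {X : Type} (F : set (set X)) :=
  [/\ F setT, (forall B C, F (B `&` C) <-> F B /\ F C) & (forall B, F (~` B) <-> ~ F B)].
Definition Yp {X : Type} (mX : X -> X -> X) (U : set (set X)) (F : set (set X)) :=
  isUF F /\ exists k, F = den mX U k.
Definition Yt {X : Type} (mX : X -> X -> X) (U : set (set X)) := {F : set (set X) | Yp mX U F}.

HB.instance Definition _ (X : Type) (mX : X -> X -> X) (U : set (set X)) := gen_eqMixin (Yt mX U).
HB.instance Definition _ (X : Type) (mX : X -> X -> X) (U : set (set X)) := gen_choiceMixin (Yt mX U).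

Definition bb {X : Type} (mX : X -> X -> X) (U : set (set X)) (B : set X) : set (Yt mX U) :=
  [set F | sval F B].

Lemma bb_cover (X : Type) (mX : X -> X -> X) (U : set (set X)) : \bigcup_(i in [set: set X]) (bb mX U i) = setT.
Proof.
apply/seteqP; split => // F _; exists setT => //.
by case: F => F [[]].
Qed.

Lemma bb_join (X : Type) (mX : X -> X -> X) (U : set (set X)) : forall (i j : set X) t, [set: set X] i -> [set: set X] j ->
  bb mX U i t -> bb mX U j t ->
    exists k, [/\ [set: set X] k, bb mX U k t & bb mX U k `<=` bb mX U i `&` bb mX U j].
Proof.
move=> i j [F [[_ HI _] _]] _ _ /= Fi Fj; exists (i `&` j); split => //=.
  by apply/HI.
by move=> [G [[_ HG _] _]] /= /HG.
Qed.

HB.instance Definition _ (X : Type) (mX : X -> X -> X) (U : set (set X)) := isBaseTopological.Build (Yt mX U)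
  (bb_cover X mX U) (bb_join X mX U).

Lemma bb_open (X : Type) (mX : X -> X -> X) (U : set (set X)) B : open (bb mX U B).
Proof.
exists [set B] => //.
by apply/seteqP; split => F; [move=> [i -> ]|exists B].
Qed.
Definition prodF {X : Type} (mX : X -> X -> X) (F G : set (set X)) : set (set X) :=
  [set B | F [set x | G [set y | B (mX x y)]]].

Lemma Y_up {X : Type} {mX : X -> X -> X} {U : set (set X)} (F : Yt mX U) (B C : set X) :
  B `<=` C -> sval F B -> sval F C.
Proof.
case: F => F [[FT FI FC] _] /= BC FB.
have E : B `&` C = B by apply/seteqP; split => [x []//|x Bx]; split => //; apply: BC.
by move: FB; rewrite -E => /FI [].
Qed.

Lemma Y_not0 {X : Type} {mX : X -> X -> X} {U : set (set X)} (F : Yt mX U) : ~ sval F set0.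
Proof.
case: F => F [[FT FI FC] _] /=.
by rewrite -setCT; move/FC.
Qed.

Lemma Y_disj {X : Type} {mX : X -> X -> X} {U : set (set X)} (F : Yt mX U) (B C : set X) :
  sval F B -> sval F C -> B `&` C = set0 -> False.
Proof.
move=> FB FC BC; apply: (@Y_not0 X mX U F); rewrite -BC.
by case: F FB FC => F [[FT FI FCC] _] /= FB FC; apply/FI.
Qed.

Lemma Y_compl {X : Type} {mX : X -> X -> X} {U : set (set X)} (F : Yt mX U) (B : set X) :
  sval F (~` B) <-> ~ sval F B.
Proof. by case: F => F [[FT FI FC] _] /=. Qed.

Lemma Y_single {X : Type} {mX : X -> X -> X} {U : set (set X)} (F : Yt mX U) (z : X) :
  sval F [set z] -> sval F = pr z.
Proof.
move=> Fz; apply/funext => B; rewrite propeqE; split => [FB|Bz].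
  apply: contrapT => nBz; apply: (@Y_disj _ _ _ F B [set z] FB Fz).
  by apply/seteqP; split => x // [Bx /= xz]; apply: nBz; rewrite -xz.
by apply: Y_up Fz => x /= ->.
Qed.

Lemma Y_eq {X : Type} {mX : X -> X -> X} {U : set (set X)} (F G : Yt mX U) :
  sval F = sval G -> F = G.
Proof.
case: F G => F PF [G PG] /= FG; subst G; congr exist; exact: Prop_irrelevance.
Qed.

Lemma bb_closed {X : Type} {mX : X -> X -> X} {U : set (set X)} B : closed (bb mX U B).
Proof.
have -> : bb mX U B = ~` bb mX U (~` B).
  apply/seteqP; split => F /=.
    by move=> FB /(@Y_compl _ _ _ F B); apply.
  move=> H; apply: contrapT => nFB; apply: H; exact/(@Y_compl _ _ _ F B).
exact/open_closedC/bb_open.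
Qed.

Lemma nbhs_Y {X : Type} {mX : X -> X -> X} {U : set (set X)} (F : Yt mX U) (W : set (Yt mX U)) :
  nbhs F W -> exists B, sval F B /\ bb mX U B `<=` W.
Proof.
rewrite nbhsE; move=> [Op [oO OF] OW].
move: oO => [D' _ eO]; move: OF; rewrite -eO; move=> [B DB FB].
by exists B; split => // G GB; apply: OW; rewrite -eO; exists B.
Qed.

Lemma Y_nbhs_bb {X : Type} {mX : X -> X -> X} {U : set (set X)} (F : Yt mX U) B :
  sval F B -> nbhs F (bb mX U B).
Proof. by move=> FB; apply: open_nbhs_nbhs; split => //; apply: bb_open. Qed.

Lemma Y_hausdorff {X : Type} {mX : X -> X -> X} {U : set (set X)} : hausdorff_space (Yt mX U).
Proof.
move=> F G clFG; apply: Y_eq; apply/funext => B; rewrite propeqE.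
have key : forall (F G : Yt mX U), cluster (nbhs F) G -> sval F B -> sval G B.
  move=> F' G' cl FB; apply: contrapT => nGB.
  have GnB : sval G' (~` B) by apply/Y_compl.
  have [H [/= HB HnB]] := cl _ _ (Y_nbhs_bb _ _ FB) (Y_nbhs_bb _ _ GnB).
  by move/Y_compl: HnB.
split; first exact: key.
apply: key => P Q HP HQ; rewrite setIC; exact: clFG.
Qed.

Lemma Y_zero_dim {X : Type} {mX : X -> X -> X} {U : set (set X)} : zero_dim (Yt mX U).
Proof.
move=> W F oW WF.
have [B [FB sub]] := nbhs_Y _ _ (open_nbhs_nbhs (conj oW WF)).
exists (bb mX U B); split => //; split; [exact: bb_open|exact: bb_closed].
Qed.



Definition Uprops {X : Type} (U : set (set X)) (A : set X) :=
  [/\ U A, (forall S T, S `<=` T -> U S -> U T), (forall S T, U S -> U T -> U (S `&` T)),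
      ~ U set0 & (forall S, U S \/ U (~` S))].

Definition Ahyp {X : Type} (mX : X -> X -> X) (A : set X) :=
  [/\ associative_op mX, (forall a x, A a -> mX a x = mX x a) &
      (forall a b a' b', A a -> A b -> A a' -> A b' -> mX a b = mX a' b')].

Lemma U_ex {X : Type} {U : set (set X)} {A : set X} {S : set X} :
  Uprops U A -> U S -> exists a, A a /\ S a.
Proof.
move=> [UA Up UI U0 _] US; apply: contrapT => H; apply: U0.
have -> : set0 = S `&` A.
  apply/seteqP; split => // a [Sa Aa]; exfalso; apply: H; by exists a.
exact: UI.
Qed.

Lemma U_agree {X : Type} {U : set (set X)} {A : set X} {S T : set X} :
  Uprops U A -> (forall a, A a -> (S a <-> T a)) -> U S -> U T.
Proof.
move=> [UA Up UI U0 _] ST US; apply: (Up (S `&` A)); last exact: UI.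
by move=> a [Sa Aa]; apply/(ST a Aa).
Qed.

Lemma U_const {X : Type} {U : set (set X)} {A : set X} (P : Prop) :
  Uprops U A -> (U [set _ | P] <-> P).
Proof.
move=> [UA Up UI U0 _]; split => [H|p].
  apply: contrapT => nP; apply: U0; move: H; congr U.
  by apply/seteqP; split => a.
by apply: (Up A).
Qed.

Lemma isUF_pr {X : Type} (z : X) : isUF (pr z).
Proof. by split => //= B C; split => [[]|[]]. Qed.

Lemma isUF_xi {X : Type} (mX : X -> X -> X) (U : set (set X)) (A : set X) x :
  Uprops U A -> isUF (xi mX U x).
Proof.
move=> HU; have [UA Up UI U0 Uu] := HU; split => /=.
- by apply: (Up A).
- move=> B C; split => [H|[HB HC]].
    by split; apply: Up H => a [].
  exact: (UI _ _ HB HC).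
- move=> B; split => [H1 H2|H].
    by apply: U0; have := UI _ _ H1 H2; apply: Up => a [].
  by case: (Uu [set a | B (mo mX a x)]).
Qed.

Definition mo2 {X : Type} (mX : X -> X -> X) (x : option X) (w : X) : X :=
  if x is Some x then mX x w else w.

Lemma L_left {X : Type} (mX : X -> X -> X) (A : set X) a z y :
  Ahyp mX A -> A a -> mX z (mo mX a y) = mo mX a (Some (mo mX z y)).
Proof.
move=> [hA cen _] Aa; case: y => [y|] /=; last by rewrite (cen a z Aa).
by rewrite hA -(cen a z Aa) -hA.
Qed.

Lemma L_right {X : Type} (mX : X -> X -> X) (A : set X) a x w :
  Ahyp mX A -> mX (mo mX a x) w = mo mX a (Some (mo2 mX x w)).
Proof. by move=> [hA _ _]; case: x => [x|] //=; rewrite hA. Qed.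

Lemma L_gen {X : Type} (mX : X -> X -> X) (A : set X) a b x y :
  Ahyp mX A -> A a -> A b ->
  mX (mo mX a x) (mo mX b y) = mo mX (mo mX (mX a b) x) y.
Proof.
move=> [hA cen _] Aa Ab; case: x => [x|]; case: y => [y|] //=.
- by rewrite (hA (mX a x) b y) -(hA a x b) -(cen b x Ab) (hA a b x).
- by rewrite -(hA a x b) -(cen b x Ab) (hA a b x).
Qed.

Lemma L_KK {X : Type} (mX : X -> X -> X) (A : set X) a b a' b' x y :
  Ahyp mX A -> A a -> A b -> A a' -> A b' ->
  mX (mo mX a x) (mo mX b y) = mX (mo mX a' x) (mo mX b' y).
Proof.
move=> H Aa Ab Aa' Ab'; rewrite (L_gen mX A a b x y H) // (L_gen mX A a' b' x y H) //.
by case: H => _ _ HK; rewrite (HK a b a' b').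
Qed.

Lemma prod_pr_pr {X : Type} (mX : X -> X -> X) z w :
  prodF mX (pr z) (pr w) = pr (mX z w).
Proof. by []. Qed.

Lemma prod_pr_xi {X : Type} (mX : X -> X -> X) (U : set (set X)) (A : set X) z y :
  Uprops U A -> Ahyp mX A ->
  prodF mX (pr z) (xi mX U y) = xi mX U (Some (mo mX z y)).
Proof.
move=> HU HA; apply/funext => B; rewrite propeqE /prodF /pr /xi /=.
by split; apply: (U_agree HU) => a Aa /=; rewrite (L_left _ _ _ _ _ HA Aa).
Qed.

Lemma prod_xi_pr {X : Type} (mX : X -> X -> X) (U : set (set X)) (A : set X) x w :
  Ahyp mX A ->
  prodF mX (xi mX U x) (pr w) = xi mX U (Some (mo2 mX x w)).
Proof.
move=> HA; apply/funext => B; rewrite propeqE /prodF /pr /xi /=.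
by under eq_fun do rewrite (L_right _ _ _ _ _ HA).
Qed.

Lemma prod_xi_xi {X : Type} (mX : X -> X -> X) (U : set (set X)) (A : set X) a0 x y :
  Uprops U A -> Ahyp mX A -> A a0 ->
  prodF mX (xi mX U x) (xi mX U y) = pr (mX (mo mX a0 x) (mo mX a0 y)).
Proof.
move=> HU HA A0; apply/funext => B; rewrite propeqE /prodF /pr /xi /=.
set K := mX _ _.
have inner : forall a, A a -> (U [set a' | B (mX (mo mX a x) (mo mX a' y))] <-> B K).
  move=> a Aa; rewrite -(U_const (B K) HU); split; apply: (U_agree HU) => a' Aa' /=;
    by rewrite /K (L_KK _ _ _ _ _ _ _ _ HA Aa Aa' A0 A0).
rewrite -(U_const (B K) HU); split; apply: (U_agree HU) => a Aa /=; by rewrite inner.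
Qed.

Lemma Yp_den {X : Type} (mX : X -> X -> X) (U : set (set X)) (A : set X) k :
  Uprops U A -> Yp mX U (den mX U k).
Proof.
move=> HU; split; last by exists k.
by case: k => [z|x] /=; [exact: isUF_pr|exact: (isUF_xi _ _ _ _ HU)].
Qed.

Lemma Yp_prod {X : Type} (mX : X -> X -> X) (U : set (set X)) (A : set X) a0 F G :
  Uprops U A -> Ahyp mX A -> A a0 -> Yp mX U F -> Yp mX U G -> Yp mX U (prodF mX F G).
Proof.
move=> HU HA A0 [_ [k ->]] [_ [l ->]].
case: k => [z|x]; case: l => [w|y] /=.
- by rewrite prod_pr_pr; exact: (Yp_den mX U A (inl (mX z w)) HU).
- by rewrite (prod_pr_xi _ _ _ _ _ HU HA); exact: (Yp_den mX U A (inr _) HU).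
- by rewrite (prod_xi_pr _ _ _ _ _ HA); exact: (Yp_den mX U A (inr _) HU).
- by rewrite (prod_xi_xi _ _ _ _ _ _ HU HA A0); exact: (Yp_den mX U A (inl _) HU).
Qed.

Definition mY {X : Type} {mX : X -> X -> X} {U : set (set X)} (F G : Yt mX U) : Yt mX U :=
  match pselect (Yp mX U (prodF mX (sval F) (sval G))) with
  | left p => exist _ _ p
  | right _ => F
  end.

Lemma val_mY {X : Type} (mX : X -> X -> X) (U : set (set X)) (F G : Yt mX U) :
  Yp mX U (prodF mX (sval F) (sval G)) -> sval (mY F G) = prodF mX (sval F) (sval G).
Proof. by rewrite /mY; case: pselect. Qed.

Lemma cont_key {X : Type} (mX : X -> X -> X) (U : set (set X)) (A : set X) a0
  (F G : Yt mX U) B :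
  Uprops U A -> Ahyp mX A -> A a0 -> prodF mX (sval F) (sval G) B ->
  exists C D, [/\ sval F C, sval G D & forall F' G' : Yt mX U,
     sval F' C -> sval G' D -> prodF mX (sval F') (sval G') B].
Proof.
move=> HU HA A0 HB.
case: F HB => F [FUF [k eF]] /= HB.
case: k eF => [z|x] eF.
  exists [set z], [set y | B (mX z y)]; split.
  - by rewrite eF.
  - by move: HB; rewrite eF.
  - by move=> F' G' F'z G'D; rewrite (Y_single F' z F'z).
case: G HB => G [GUF [l eG]] /= HB.
case: l eG => [w|y] eG.
  exists [set s | B (mX s w)], [set w]; split.
  - by move: HB; rewrite eG.
  - by rewrite eG.
  - by move=> F' G' F'C G'w; rewrite /prodF (Y_single G' w G'w).
have [UA Up _ _ _] := HU.
exists [set t | exists a, A a /\ t = mo mX a x], [set t | exists a, A a /\ t = mo mX a y].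
split.
- by rewrite eF /xi /=; apply: (Up A) => // a Aa; exists a.
- by rewrite eG /xi /=; apply: (Up A) => // a Aa; exists a.
move: HB; rewrite eF eG (prod_xi_xi _ _ _ a0 _ _ HU HA A0) /pr => HK F' G' F'C G'D.
apply: (Y_up F' _ _ _ F'C) => s [a [Aa ->]].
apply: (Y_up G' _ _ _ G'D) => t [b [Ab ->]].
by rewrite /= (L_KK _ _ _ _ a0 a0 _ _ HA Aa Ab A0 A0).
Qed.

Lemma Y_cont {X : Type} (mX : X -> X -> X) (U : set (set X)) (A : set X) a0 :
  Uprops U A -> Ahyp mX A -> A a0 ->
  continuous (fun p : Yt mX U * Yt mX U => mY p.1 p.2).
Proof.
move=> HU HA A0 [F G] W /= HW.
have YP : forall F' G' : Yt mX U, Yp mX U (prodF mX (sval F') (sval G')).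
  by move=> F' G'; apply: (Yp_prod _ _ _ a0 _ _ HU HA A0); apply: proj2_sig.
have [B [HB sub]] := nbhs_Y _ _ HW.
rewrite val_mY // in HB.
have [C [D [FC GD H]]] := cont_key _ _ _ a0 F G B HU HA A0 HB.
exists (bb mX U C, bb mX U D); first by split; apply: Y_nbhs_bb.
move=> [F' G'] [/= HC HD]; apply: sub; rewrite /bb /= val_mY //.
exact: H.
Qed.

Lemma Y_assoc {X : Type} (mX : X -> X -> X) (U : set (set X)) (A : set X) a0 :
  Uprops U A -> Ahyp mX A -> A a0 -> associative_op (@mY X mX U).
Proof.
move=> HU HA A0.
have YP : forall F' G' : Yt mX U, Yp mX U (prodF mX (sval F') (sval G')).
  by move=> F' G'; apply: (Yp_prod _ _ _ a0 _ _ HU HA A0); apply: proj2_sig.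
have [hA _ _] := HA.
move=> F G H; apply: Y_eq; rewrite !(val_mY _ _ _ _ (YP _ _)).
apply/funext => B; rewrite /prodF /=.
congr (sval F); apply/funext => x; congr (sval G); apply/funext => x'.
congr (sval H); apply/funext => y /=. by rewrite hA.
Qed.

Theorem lemma5p3 (X : Type) (mX : X -> X -> X) :
  associative_op mX -> TzS_closed mX ->
  forall A : set X, A `<=` sg_center mX -> ~ finite_set A ->
    ~ (exists c : X, setmul mX A = [set c]).
Proof.
move=> hA Hcl A Acen Ainf [c Hc].
have AAc : forall a b, A a -> A b -> mX a b = c.
  move=> a b Aa Ab; have : setmul mX A (mX a b) by exists a, b.
  by rewrite Hc.
have HA : Ahyp mX A.
  split => //; first by move=> a x /Acen.
  by move=> a b a' b' Aa Ab Aa' Ab'; rewrite !AAc.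
have [a0 A0] : exists a, A a.
  apply: contrapT => nA; apply: Ainf.
  have -> : A = set0 by apply/seteqP; split => // a Aa; apply: nA; exists a.
  exact: finite_set0.
pose F0 := [set B : set X | exists S, finite_set S /\ A `\` S `<=` B].
have PF : ProperFilter F0.
  split.
    move=> [S [fS sub]]; apply: Ainf; apply: (sub_finite_set _ fS) => a Aa.
    by apply: contrapT => nSa; have := sub a (conj Aa nSa).
  split.
  - by exists set0; split => //; exact: finite_set0.
  - move=> B C [S [fS sB]] [T [fT sC]]; exists (S `|` T); split.
      by rewrite finite_setU.
    by move=> a [Aa nST]; split; [apply: sB|apply: sC]; split => // ?; apply: nST; [left|right].
  - by move=> B C BC [S [fS sB]]; exists S; split => // a /sB /BC.
have [U [UU F0U]] := ultraFilterLemma PF.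
have HU : Uprops U A.
  split.
  - by apply: F0U; exists set0; split; [exact: finite_set0| move=> a []].
  - by move=> S T; apply: filterS.
  - by move=> S T; apply: filterI.
  - exact: filter_not_empty.
  - by move=> S; apply: in_ultra_setVsetC.
have Ufree : forall z, ~ U [set z].
  move=> z Uz; apply: (filter_not_empty U).
  have UAz : U (A `\` [set z]) by apply: F0U; exists [set z]; split; [exact: finite_set1|].
  apply: (filterS _ (filterI UAz Uz)) => a [[_ nz] az]; exact: nz.
pose h := fun z : X => (exist _ (pr z) (Yp_den mX U A (inl z) HU) : Yt mX U).
have YP : forall F' G' : Yt mX U, Yp mX U (prodF mX (sval F') (sval G')).
  by move=> F' G'; apply: (Yp_prod _ _ _ a0 _ _ HU HA A0); apply: proj2_sig.
have cl := Hcl (Yt mX U) mY h.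
have : closed (range h).
  apply: cl.
    split.
    - exact: (Y_assoc _ _ _ a0 HU HA A0).
    - exact: (Y_cont _ _ _ a0 HU HA A0).
    - exact: Y_hausdorff.
    - exact: Y_zero_dim.
  split.
  - move=> z w /(congr1 sval) /= E.
    have : pr w [set z] by rewrite -E.
    by [].
  - by move=> z w; apply: Y_eq; rewrite (val_mY _ _ _ _ (YP _ _)).
  - move=> z; exists (bb mX U [set z]); split; first exact: bb_open.
    apply/seteqP; split => G.
      by move=> [Gz _]; apply: Y_eq; exact: (Y_single G z Gz).
    by move=> ->; split; [|exists z].
pose p := (exist _ (xi mX U None) (Yp_den mX U A (inr None) HU) : Yt mX U).
move=> /(_ p) pin.
have [z _ hz] : range h p.
  apply: pin => B /(nbhs_Y _ _) [C [/= UC sub]].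
  have [a [Aa Ca]] := U_ex HU UC.
  by exists (h a); split; [exists a|apply: sub].
apply: (Ufree z); move: hz => /(congr1 sval) /= E.
have : xi mX U None [set z] by rewrite -E.
by [].
Qed.
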